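(* Let $M\in\mathcal H(m,n)$, $m+n=4$, $m,n\ge1$, be horizontally periodic with exactly three horizontal cylinders $C_1,C_2,C_3$ whose core curves are linearly independent in $H_1(M;\mathbb R)$. Suppose that no horizontal saddle connection lies in both the top and the bottom boundary of the same cylinder, and that none of $C_1,C_2,C_3$ is semi-simple. Then, up to relabeling, the cylinder diagram of $M$ is the following unique one: there are six horizontal saddle connections $1,\dots,6$; reading left to right, the top boundary of $C_1$ is $1,2$ and its bottom is $4,5$; the top of $C_2$ is $5,3$ and its bottom is $2,6$; the top of $C_3$ is $6,4$ and its bottom is $3,1$ (a saddle connection in the top of one cylinder is glued to the same-labelled saddle connection in the bottom of another). In particular each pair of cylinders shares exactly two saddle connections.
   Context: A cylinder is semi-simple if one of its two boundary components consists of a single horizontal saddle connection. A cylinder diagram records the horizontal cylinders together with the cyclically ordered sequences of saddle connections forming their top and bottom boundaries and their identifications, ignoring lengths. A horizontally periodic surface in a genus three stratum with two zeros has exactly six horizontal saddle connections. *)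

(* Defs.v *)
From HB Require Import structures.
From mathcomp Require Import all_boot all_order all_algebra all_fingroup.
Set Implicit Arguments. Unset Strict Implicit. Unset Printing Implicit Defensive.
Import Order.TTheory GRing.Theory Num.Theory.

(* A cylinder diagram with 3 horizontal cylinders ('I_3) and the 6 horizontal
   saddle connections ('I_6) of a horizontally periodic surface in a genus 3
   stratum with two zeros.  [top D i] (resp. [bot D i]) is the cyclic sequence
   of saddle connections read left to right along the top (resp. bottom)
   boundary of cylinder i.  Saddle connection s in the top of one cylinder is
   glued to s in the bottom of another one. *)
Record cyl_diagram := CylDiagram {
  top : 'I_3 -> seq 'I_6;
  bot : 'I_3 -> seq 'I_6 }.

Definition well_formed (D : cyl_diagram) : bool :=
  [&& perm_eq (flatten [seq top D i | i <- enum 'I_3]) (enum 'I_6),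
      perm_eq (flatten [seq bot D i | i <- enum 'I_3]) (enum 'I_6) &
      [forall i, (top D i != [::]) && (bot D i != [::])]].

(* there are positive lengths of the saddle connections making the top and
   bottom of every cylinder of equal length (heights and twists are free) *)
Definition realizable (D : cyl_diagram) : Prop :=
  exists l : 'I_6 -> nat, (forall s, 0 < l s) /\
    forall i, \sum_(s <- top D i) l s = \sum_(s <- bot D i) l s.

Definition cyl_adj (D : cyl_diagram) : rel 'I_3 :=
  fun i j => has (mem (bot D j)) (top D i) || has (mem (bot D i)) (top D j).
Definition connected_diagram (D : cyl_diagram) : Prop :=
  forall i j : 'I_3, connect (cyl_adj D) i j.

(* Endpoints of saddle connections: (s,false) = left end, (s,true) = right end.
   Consecutive saddle connections s, t (cyclically) in a boundary component
   meet at a point: the right end of s is the left end of t. *)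
Definition endpoint := ('I_6 * bool)%type.
Definition junction (D : cyl_diagram) (x y : endpoint) : bool :=
  [exists i : 'I_3, [&& x.2, ~~ y.2, x.1 \in top D i & y.1 == next (top D i) x.1]]
  || [exists i : 'I_3, [&& x.2, ~~ y.2, x.1 \in bot D i & y.1 == next (bot D i) x.1]].
Definition vrel (D : cyl_diagram) : rel endpoint :=
  fun x y => junction D x y || junction D y x.
Definition same_vertex (D : cyl_diagram) (x y : endpoint) : bool :=
  connect (vrel D) x y.

(* Each endpoint at a vertex corresponds to one junction there, and each
   junction contributes a sector of angle pi; so the cone angle at a vertex is
   pi * (number of endpoints identified with it).  The surface lies in
   H(m,n): exactly two singular points, of cone angles 2pi(m+1), 2pi(n+1). *)
Definition in_stratum (D : cyl_diagram) (m n : nat) : Prop :=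
  exists v w : endpoint,
    [/\ ~~ same_vertex D v w,
        forall e, same_vertex D v e || same_vertex D w e,
        #|[set e | same_vertex D v e]| = 2 * m.+1 &
        #|[set e | same_vertex D w e]| = 2 * n.+1].

Definition diagram_in_stratum (D : cyl_diagram) (m n : nat) : Prop :=
  [/\ well_formed D, realizable D, connected_diagram D & in_stratum D m n].

(* Cellular structure: 0-cells the zeros, 1-cells the saddle
   connections plus one transversal per cylinder, 2-cells the cylinders cut
   along their transversal, with boundary  sum(bottom) - sum(top)  (the
   transversal cancels).  The core curve of C_i is homologous to the cycle
   sum(top of C_i).  Linear independence of the core curves in H_1(M;R):
   a combination  sum a_i top_i  lies in the image of the boundary map only
   for a = 0.  (Coefficients in rat: the matrices are rational, so this is
   equivalent to the statement over R.) *)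
Local Open Scope ring_scope.
Definition ind (b : bool) : rat := (b : nat)%:R.
Definition core_curves_independent (D : cyl_diagram) : Prop :=
  forall a b : 'I_3 -> rat,
    (forall s : 'I_6,
       \sum_(i < 3) a i * ind (s \in top D i)
       = \sum_(j < 3) b j * (ind (s \in bot D j) - ind (s \in top D j))) ->
    forall i, a i = 0.
Local Close Scope ring_scope.

Definition no_self_glued (D : cyl_diagram) : Prop :=
  forall (i : 'I_3) (s : 'I_6), ~~ ((s \in top D i) && (s \in bot D i)).

Definition semi_simple (D : cyl_diagram) (i : 'I_3) : bool :=
  (size (top D i) == 1) || (size (bot D i) == 1).

(* The target diagram, with labels 1..6 written 0..5:
   C1: top 1,2  bottom 4,5 ; C2: top 5,3  bottom 2,6 ; C3: top 6,4 bottom 3,1 *)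
Definition o6 (k : nat) : 'I_6 := inord k.
Definition std_top (i : 'I_3) : seq 'I_6 :=
  map o6 (nth [::] [:: [:: 0; 1]; [:: 4; 2]; [:: 5; 3]] i).
Definition std_bot (i : 'I_3) : seq 'I_6 :=
  map o6 (nth [::] [:: [:: 3; 4]; [:: 1; 5]; [:: 2; 0]] i).

Definition cyc_eq (s t : seq 'I_6) : Prop := exists r, s = rot r t.

Definition iso_std (D : cyl_diagram) : Prop :=
  exists (sigma : {perm 'I_3}) (tau : {perm 'I_6}),
    forall i : 'I_3,
      cyc_eq (top D (sigma i)) (map tau (std_top i)) /\
      cyc_eq (bot D (sigma i)) (map tau (std_bot i)).

Definition bdry (D : cyl_diagram) (i : 'I_3) : seq 'I_6 := top D i ++ bot D i.
Definition pairs_share_two (D : cyl_diagram) : Prop :=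
  forall i j : 'I_3, i != j ->
    #|[set s : 'I_6 | (s \in bdry D i) && (s \in bdry D j)]| = 2.

(* Main.v *)
Require Import Defs.
From mathcomp Require Import all_boot all_order all_algebra all_fingroup.
Set Implicit Arguments. Unset Strict Implicit. Unset Printing Implicit Defensive.

Notation O6 k := (@Ordinal 6 k isT).
Notation O3 k := (@Ordinal 3 k isT).
Definition I3 : seq 'I_3 := [:: O3 0; O3 1; O3 2].
Definition I6 : seq 'I_6 := [:: O6 0; O6 1; O6 2; O6 3; O6 4; O6 5].
Definition EP : seq endpoint := [seq (s, b) | s <- I6, b <- [:: false; true]].

Fixpoint hasl T (p : T -> bool) (s : seq T) :=
  if s is x :: s' then (if p x then true else hasl p s') else false.
Fixpoint alll T (p : T -> bool) (s : seq T) :=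
  if s is x :: s' then (if p x then alll p s' else false) else true.

Definition mkD (c0 c1 c2 c3 c4 c5 : 'I_6) : cyl_diagram :=
  CylDiagram (fun i => nth [::] [:: [:: O6 0; O6 1]; [:: O6 2; O6 3]; [:: O6 4; O6 5]] i)
             (fun i => nth [::] [:: [:: c0; c1]; [:: c2; c3]; [:: c4; c5]] i).
Definition stop (i : 'I_3) : seq 'I_6 :=
  nth [::] [:: [:: O6 0; O6 1]; [:: O6 4; O6 2]; [:: O6 5; O6 3]] i.
Definition sbot (i : 'I_3) : seq 'I_6 :=
  nth [::] [:: [:: O6 3; O6 4]; [:: O6 1; O6 5]; [:: O6 2; O6 0]] i.

Definition junction' (X : cyl_diagram) (x y : endpoint) : bool :=
  has (fun i => [&& x.2, ~~ y.2, x.1 \in top X i & y.1 == next (top X i) x.1]) I3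
  || has (fun i => [&& x.2, ~~ y.2, x.1 \in bot X i & y.1 == next (bot X i) x.1]) I3.
Definition vrel' X x y := junction' X x y || junction' X y x.
Fixpoint clos X n (S : seq endpoint) :=
  if n is n'.+1 then
    let S' := undup (S ++ [seq b <- EP | has (fun a => vrel' X a b) S]) in
    if size S' == size S then S else clos X n' S'
  else S.
Definition closed_small X (S : seq endpoint) :=
  (size S <= 3) && all (fun a => all (fun b => vrel' X a b ==> (b \in S)) EP) S.
Definition stratum_bad X := hasl (fun e => let S := clos X 12 [:: e] in if (e \in S) then closed_small X S else false) EP.

Definition noself_b X := all (fun i => all (fun s => ~~ ((s \in top X i) && (s \in bot X i))) I6) I3.
Definition xx X (i j : 'I_3) : 'I_6 := nth ord0 (filter (mem (bot X j)) (top X i)) 0.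
Definition taul X := [:: xx X (O3 0) (O3 2); xx X (O3 0) (O3 1); xx X (O3 1) (O3 2);
                        xx X (O3 2) (O3 0); xx X (O3 1) (O3 0); xx X (O3 2) (O3 1)].
Definition tauf X (k : 'I_6) := nth ord0 (taul X) k.
Definition cyc_b (s t : seq 'I_6) := has (fun r => s == rot r t) [:: 0; 1; 2].
Definition iso_b X := uniq (taul X) && all (fun i =>
   cyc_b (top X i) (map (tauf X) (stop i)) && cyc_b (bot X i) (map (tauf X) (sbot i))) I3.
Definition pairs_b X := all (fun i => all (fun j => (i != j) ==>
    (size (filter (fun s => (s \in bdry X i) && (s \in bdry X j)) I6) == 2)) I3) I3.
Definition Pc X := if noself_b X then (if iso_b X then (if pairs_b X then true else stratum_bad X) else stratum_bad X) else true.
Definition bigb := alll (fun c0 => alll (fun c1 => alll (fun c2 => alll (fun c3 => alll (fun c4 =>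
  alll (fun c5 => if uniq [:: c0; c1; c2; c3; c4; c5] then Pc (mkD c0 c1 c2 c3 c4 c5) else true) I6) I6) I6) I6) I6) I6.

Lemma bigcheck : bigb. Proof. vm_compute. reflexivity. Qed.

Lemma alll_in (T : eqType) (p : T -> bool) (s : seq T) x : x \in s -> alll p s -> p x.
Proof.
elim: s => //= y s IH; rewrite inE; case/orP => [/eqP->|xs]; case: (p y) => //.
exact: IH.
Qed.

Lemma hasl_has T (p : T -> bool) s : hasl p s = has p s.
Proof. by elim: s => //= y s ->; case: (p y). Qed.

Lemma ord3_cases (i : 'I_3) : i = O3 0 \/ i = O3 1 \/ i = O3 2.
Proof.
case: i => [[|[|[|k]]] Hk]; [left|right;left|right;right|by []]; exact: val_inj.
Qed.

Lemma mem_I3 i : i \in I3.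
Proof. by case: (ord3_cases i) => [->|[->|->]]. Qed.

Lemma mem_I6 (s : 'I_6) : s \in I6.
Proof. by case: s => [[|[|[|[|[|[|k]]]]]] Hk]. Qed.

Lemma mem_EP (e : endpoint) : e \in EP.
Proof.
case: e => s b; apply/allpairsP; exists (s, b); split => //=; first exact: mem_I6.
by case: b.
Qed.

Lemma enumI3 : enum 'I_3 = I3.
Proof. by apply: (inj_map val_inj); rewrite val_enum_ord. Qed.

Lemma junctionE X x y : junction X x y = junction' X x y.
Proof.
rewrite /junction /junction'; congr orb; apply/existsP/hasP.
- by case=> i Hi; exists i => //; exact: mem_I3.
- by case=> i _ Hi; exists i.
- by case=> i Hi; exists i => //; exact: mem_I3.
- by case=> i _ Hi; exists i.
Qed.

Lemma vrelE X x y : vrel X x y = vrel' X x y.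
Proof. by rewrite /vrel /vrel' !junctionE. Qed.

Lemma vrel_sym X : symmetric (vrel X).
Proof. by move=> x y; rewrite /vrel orbC. Qed.

Lemma closed_conn X (S : seq endpoint) e e' :
  all (fun a => all (fun b => vrel' X a b ==> (b \in S)) EP) S ->
  e \in S -> connect (vrel X) e e' -> e' \in S.
Proof.
move=> cl eS /connectP [p pth ->].
elim: p e eS pth => [|a p IH] e eS //= /andP [ea pth].
apply: IH pth; have := allP cl e eS => /allP /(_ a (mem_EP a)).
by rewrite -vrelE ea.
Qed.

From mathcomp Require Import zify.

Lemma bad_not_stratum X m n : 1 <= m -> 1 <= n -> stratum_bad X -> ~ in_stratum X m n.
Proof.
move=> m1 n1; rewrite /stratum_bad hasl_has => /hasP [e _].
set S := clos X 12 [:: e]; case: ifP => // eS /andP [sz cl] [v [w [_ cov cv cw]]].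
have le3 : #|[set e' | same_vertex X e e']| <= 3.
  apply: leq_trans sz; apply: leq_trans (card_size S); apply: subset_leq_card.
  by apply/subsetP => e'; rewrite inE; exact: closed_conn cl eS.
have csym := sym_connect_sym (vrel_sym X).
case/orP: (cov e) => H.
- have : [set e' | same_vertex X v e'] = [set e' | same_vertex X e e'].
    by apply/setP => e'; rewrite !inE /same_vertex (same_connect csym H).
  move=> E; move: le3; rewrite -E cv; lia.
- have : [set e' | same_vertex X w e'] = [set e' | same_vertex X e e'].
    by apply/setP => e'; rewrite !inE /same_vertex (same_connect csym H).
  move=> E; move: le3; rewrite -E cw; lia.
Qed.

Lemma pairs_bP X : pairs_b X -> pairs_share_two X.
Proof.
move=> H i j ij; have := allP H i (mem_I3 i) => /allP /(_ j (mem_I3 j)).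
rewrite ij /= => /eqP E; apply: etrans E.
have /card_uniqP <- := filter_uniq (fun s => (s \in bdry X i) && (s \in bdry X j)) (isT : uniq I6).

by apply: eq_card => s; rewrite inE mem_filter mem_I6 andbT.
Qed.

Lemma std_topE i : std_top i = stop i.
Proof.
by case: (ord3_cases i) => [->|[->|->]]; rewrite /std_top /stop /o6 /=;
  congr [:: _; _]; apply: val_inj; rewrite /= inordK.
Qed.

Lemma std_botE i : std_bot i = sbot i.
Proof.
by case: (ord3_cases i) => [->|[->|->]]; rewrite /std_bot /sbot /o6 /=;
  congr [:: _; _]; apply: val_inj; rewrite /= inordK.
Qed.

Lemma cyc_bP s t : cyc_b s t -> cyc_eq s t.
Proof. by case/hasP => r _ /eqP ->; exists r. Qed.

Lemma iso_bP X : iso_b X -> iso_std X.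
Proof.
case/andP => U H.
have inj : injective (tauf X).
  have sz : size (taul X) = 6 by [].
  move=> a b E; apply: val_inj; apply/eqP.
  by rewrite -(nth_uniq ord0 _ _ U) ?sz ?ltn_ord //; apply/eqP.
exists 1%g, (perm inj) => i; rewrite perm1.
have /andP [c1 c2] := allP H i (mem_I3 i).
rewrite std_topE std_botE.
have -> : map (perm inj) (stop i) = map (tauf X) (stop i) by apply: eq_map => k; rewrite permE.
have -> : map (perm inj) (sbot i) = map (tauf X) (sbot i) by apply: eq_map => k; rewrite permE.
by split; apply: cyc_bP.
Qed.

Definition relab (t : {perm 'I_6}) (X Y : cyl_diagram) :=
  (forall i, top Y i = map t (top X i)) /\ (forall i, bot Y i = map t (bot X i)).

Lemma nth_map_any (f : 'I_6 -> 'I_6) y p k : nth (f y) (map f p) k = f (nth y p k).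
Proof.
case: (ltnP k (size p)) => Hl; first by rewrite (nth_map y).
by rewrite !nth_default ?size_map.
Qed.

Lemma next_map_inj (f : 'I_6 -> 'I_6) (fi : injective f) p x :
  next (map f p) (f x) = f (next p x).
Proof.
rewrite !next_nth (mem_map fi); case: ifP => // _.
case: p => //= y p; rewrite (inj_eq fi).
by case: eqP => _ //=; rewrite ?(index_map fi) nth_map_any.
Qed.

Lemma mem_mapV (t : {perm 'I_6}) s A : (s \in map t A) = ((t^-1)%g s \in A).
Proof. by rewrite -{1}(permKV t s) (mem_map (@perm_inj _ t)). Qed.

Lemma conn_h (T : finType) (e e' : rel T) (h g : T -> T) :
  cancel h g -> cancel g h -> (forall x y, e' (h x) (h y) = e x y) ->
  forall x y, connect e' (h x) (h y) = connect e x y.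
Proof.
move=> hK gK He x y; apply/connectP/connectP => [[p pth Hl]|[p pth ->]].
- exists (map g p).
    rewrite -{1}(hK x) path_map (@eq_path _ _ e') // => a b /=.
    by rewrite -He !gK.
  by rewrite -{1}(hK x) last_map -Hl hK.
- exists (map h p); last by rewrite last_map.
  by rewrite path_map (@eq_path _ _ e) // => a b /=; rewrite He.
Qed.

Lemma relab_stratum t X Y m n : relab t X Y -> in_stratum X m n -> in_stratum Y m n.
Proof.
move=> [RT RB] [v [w [nvw cov cv cw]]].
pose h (e : endpoint) : endpoint := (t e.1, e.2).
pose g (e : endpoint) : endpoint := ((t^-1)%g e.1, e.2).
have hK : cancel h g by case=> a b; rewrite /h /g /= permK.
have gK : cancel g h by case=> a b; rewrite /h /g /= permKV.
have ti := @perm_inj _ t.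
have jE x y : junction Y (h x) (h y) = junction X x y.
  rewrite /junction; congr orb; apply: eq_existsb => i /=;
  by rewrite ?RT ?RB (mem_map ti) next_map_inj // (inj_eq ti).
have svE x y : same_vertex Y (h x) (h y) = same_vertex X x y.
  by apply: conn_h => // a b; rewrite /vrel !jE.
have setE z : [set e | same_vertex Y (h z) e] = g @^-1: [set e | same_vertex X z e].
  by apply/setP => e; rewrite !inE -{1}(gK e) svE.
exists (h v), (h w); split.
- by rewrite svE.
- by move=> e; rewrite -(gK e) !svE.
- by rewrite setE card_preimset //; exact: can_inj gK.
- by rewrite setE card_preimset //; exact: can_inj gK.
Qed.

Lemma relab_iso t X Y : relab t X Y -> iso_std X -> iso_std Y.
Proof.
move=> [RT RB] [sigma [tau H]]; exists sigma, (tau * t)%g => i.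
have [[r1 E1] [r2 E2]] := H i.
have mE s : map (tau * t)%g s = map t (map tau s).
  by rewrite -map_comp; apply: eq_map => k; rewrite permM.
by split; [exists r1; rewrite RT E1 map_rot mE | exists r2; rewrite RB E2 map_rot mE].
Qed.

Lemma relab_pairs t X Y : relab t X Y -> pairs_share_two X -> pairs_share_two Y.
Proof.
move=> [RT RB] H i j ij; apply: etrans (H i j ij); apply: etrans (card_preimset _ (@perm_inj _ t^-1)).
by apply: eq_card => s; rewrite !inE /bdry !RT !RB -!map_cat !mem_mapV.
Qed.

Lemma relab_noself t X Y : relab t X Y -> no_self_glued X -> no_self_glued Y.
Proof. by move=> [RT RB] H i s; rewrite RT RB !mem_mapV. Qed.

Lemma ge2 (s : seq 'I_6) : s != [::] -> size s != 1 -> 1 < size s.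
Proof. by case: s => [|x [|y s]]. Qed.

Lemma size2 (s : seq 'I_6) : size s = 2 -> exists x y, s = [:: x; y].
Proof. by case: s => [|x [|y [|z s]]] //= _; exists x, y. Qed.

Lemma mapKV (t : {perm 'I_6}) s : map t (map (t^-1)%g s) = s.
Proof. by elim: s => //= x s ->; rewrite permKV. Qed.

Unset Implicit Arguments.
Theorem mainTheorem20 (D : cyl_diagram) (m n : nat) :
  1 <= m -> 1 <= n -> m + n = 4 ->
  diagram_in_stratum D m n ->
  core_curves_independent D ->
  no_self_glued D ->
  (forall i : 'I_3, ~~ semi_simple D i) ->
  iso_std D /\ pairs_share_two D.
Proof.
move=> m1 n1 _ [wf _ _ st] _ ns nss.
case/and3P: wf => pT pB /forallP ne.
rewrite enumI3 in pT pB.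
have g2 i : 1 < size (top D i) /\ 1 < size (bot D i).
  have /andP [a b] := ne i; have := nss i; rewrite /semi_simple negb_or => /andP [c d].
  by split; apply: ge2.
have [t0 b0] := g2 (O3 0); have [t1 b1] := g2 (O3 1); have [t2 b2] := g2 (O3 2).
have := perm_size pT; have := perm_size pB; rewrite size_enum_ord /= !size_cat /= => sB sT.
have [x0 [y0 Et0]] : exists x y, top D (O3 0) = [:: x; y] by apply: size2; lia.
have [x1 [y1 Et1]] : exists x y, top D (O3 1) = [:: x; y] by apply: size2; lia.
have [x2 [y2 Et2]] : exists x y, top D (O3 2) = [:: x; y] by apply: size2; lia.
have [a0 [a1 Eb0]] : exists x y, bot D (O3 0) = [:: x; y] by apply: size2; lia.
have [a2 [a3 Eb1]] : exists x y, bot D (O3 1) = [:: x; y] by apply: size2; lia.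
have [a4 [a5 Eb2]] : exists x y, bot D (O3 2) = [:: x; y] by apply: size2; lia.
have Ut : uniq (flatten [seq top D i | i <- I3]) by rewrite (perm_uniq pT) enum_uniq.
have Ub : uniq (flatten [seq bot D i | i <- I3]) by rewrite (perm_uniq pB) enum_uniq.
have FT : flatten [seq top D i | i <- I3] = [:: x0; y0; x1; y1; x2; y2] by rewrite /= Et0 Et1 Et2.
have FB : flatten [seq bot D i | i <- I3] = [:: a0; a1; a2; a3; a4; a5] by rewrite /= Eb0 Eb1 Eb2.
rewrite FT in Ut; rewrite FB in Ub.
set ts := [:: x0; y0; x1; y1; x2; y2] in Ut.
have finj : injective (fun k : 'I_6 => nth x0 ts k).
  have sz : size ts = 6 by [].
  move=> a b E; apply: val_inj; apply/eqP.
  by rewrite -(nth_uniq x0 _ _ Ut) ?sz ?ltn_ord //; apply/eqP.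
set tau := perm finj.
have e0 : tau (O6 0) = x0 by rewrite permE.
have e1 : tau (O6 1) = y0 by rewrite permE.
have e2 : tau (O6 2) = x1 by rewrite permE.
have e3 : tau (O6 3) = y1 by rewrite permE.
have e4 : tau (O6 4) = x2 by rewrite permE.
have e5 : tau (O6 5) = y2 by rewrite permE.
set D' := mkD ((tau^-1)%g a0) ((tau^-1)%g a1) ((tau^-1)%g a2) ((tau^-1)%g a3)
              ((tau^-1)%g a4) ((tau^-1)%g a5).
have R1 : relab (tau^-1)%g D D'.
  split => i; case: (ord3_cases i) => [->|[->|->]];
  rewrite ?Et0 ?Et1 ?Et2 ?Eb0 ?Eb1 ?Eb2 //=;
  by rewrite -?e0 -?e1 -?e2 -?e3 -?e4 -?e5 !permK.
have R2 : relab tau D' D.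
  by case: R1 => RT RB; split => i; rewrite ?RT ?RB mapKV.
have NS : noself_b D'.
  have ns' := relab_noself R1 ns.
  by apply/allP => i _; apply/allP => s _; apply: ns'.
have Uc : uniq [:: (tau^-1)%g a0; (tau^-1)%g a1; (tau^-1)%g a2; (tau^-1)%g a3;
              (tau^-1)%g a4; (tau^-1)%g a5].
  have : uniq (map (tau^-1)%g [:: a0; a1; a2; a3; a4; a5]).
    by rewrite (map_inj_uniq (@perm_inj _ _)).
  by [].
have NB : stratum_bad D' = false.
  apply/negP => B; exact: (bad_not_stratum m1 n1 B (relab_stratum R1 st)).
have H := alll_in (mem_I6 ((tau^-1)%g a0)) bigcheck; cbv beta in H.
have {}H := alll_in (mem_I6 ((tau^-1)%g a1)) H; cbv beta in H.
have {}H := alll_in (mem_I6 ((tau^-1)%g a2)) H; cbv beta in H.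
have {}H := alll_in (mem_I6 ((tau^-1)%g a3)) H; cbv beta in H.
have {}H := alll_in (mem_I6 ((tau^-1)%g a4)) H; cbv beta in H.
have {}H := alll_in (mem_I6 ((tau^-1)%g a5)) H; cbv beta in H.
rewrite Uc -/D' /Pc NS NB in H.
case E1 : (iso_b D') H => //; case E2 : (pairs_b D') => // _.
split; [exact: relab_iso R2 (iso_bP E1) | exact: relab_pairs R2 (pairs_bP E2)].
Qed.
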